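(* There is a non-adaptive deterministic group testing algorithm on $n$ items that makes $t=\log n+0.5\log\log n+O(1)$ tests and decides whether $d\le 1$, and if $d=1$ detects the defective item.
   Context: Group testing: items $X=[n]$, unknown defective set $I\subseteq X$ with $d=|I|$. A test $Q\subseteq X$ has answer $1$ if $Q\cap I\neq\emptyset$ and $0$ otherwise. A non-adaptive algorithm fixes all its tests in advance, then computes its output from the answers. Logarithms are base 2. *)

(* Defs.v *)
From Stdlib Require Import Reals.
From mathcomp Require Import all_boot.
Set Implicit Arguments. Unset Strict Implicit. Unset Printing Implicit Defensive.

Definition log2R (x : R) : R := Rdiv (ln x) (ln (IZR 2)).

Definition answers (n t : nat) (Q : 'I_t -> {set 'I_n}) (I : {set 'I_n})
  : {ffun 'I_t -> bool} :=
  [ffun j => Q j :&: I != set0].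

(** A non-adaptive algorithm = fixed tests [Q] plus a decoder applied to
    the answers. The decoder outputs a boolean (is d <= 1 ?) and an item
    (the defective one, meaningful when d = 1). *)
Definition detects_le1 (n t : nat) (Q : 'I_t -> {set 'I_n})
  (dec : {ffun 'I_t -> bool} -> bool) (det : {ffun 'I_t -> bool} -> 'I_n) : Prop :=
  forall I : {set 'I_n},
    dec (answers Q I) = (#|I| <= 1)%N /\
    (#|I| = 1%N -> I = [set det (answers Q I)]).

(* Main.v *)
Require Import Defs.
From Stdlib Require Import Reals Lra.
From mathcomp Require Import all_boot zify.
Set Implicit Arguments. Unset Strict Implicit. Unset Printing Implicit Defensive.

Lemma bin_rec m : m.+1 * 'C(m.+1.*2, m.+1) = (m.*2.+1).*2 * 'C(m.*2, m).
Proof.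
have h1 := mul_bin_diag (m.+1.*2) m.
have h2 := mul_bin_diag (m.*2.+1) m.
have h3 : 'C(m.*2.+1, m.+1) = 'C(m.*2.+1, m).
  by rewrite -bin_sub; [congr 'C(_,_); lia | lia].
rewrite /= in h1 h2.
have e : m.+1.*2.-1 = m.*2.+1 by rewrite doubleS.
rewrite ?e in h1. move: h1 h2 h3 =>h1 h2 h3; idtac.
rewrite h3 in h2.
rewrite -h1; lia.
Qed.
Lemma bin_bound m : 0 < m -> 16^m <= 4*m*('C(m.*2, m))^2.
Proof.
elim: m => // m IH _.
case: m IH => [|m] IH; first by [].
have IH' := IH isT.
have r := bin_rec m.+1.
set B := 'C(_, m.+1) in IH' r. set B' := 'C(_, m.+2) in r *.
rewrite expnS.
have hpos : 0 < m.+1 by [].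
set P := 16 ^ m.+1 in IH' *.
rewrite -(leq_pmul2l (isT : 0 < m.+1 * m.+2)).
have -> : m.+1 * m.+2 * (4 * m.+2 * B' ^ 2) = 4 * m.+1 * (m.+2 * B') ^ 2 by rewrite !expnS expn0; lia.
rewrite r.
have -> : 4 * m.+1 * (m.+1.*2.+1.*2 * B) ^ 2 = 4 * (m.+1.*2.+1)^2 * (4 * m.+1 * B ^ 2) by rewrite !expnS expn0 -!muln2; lia.
apply: (leq_trans _ (leq_mul (leqnn _) IH')).
rewrite -!muln2; nia.
Qed.

Section C.
Variables (n t k : nat) (i0 : 'I_n) (Hk : 0 < k) (H : n <= 'C(t, k)).
Let S := [set A : {set 'I_t} | #|A| == k].
Let HS : n <= #|S|. Proof. by rewrite card_draws card_ord. Qed.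
Definition col (i : 'I_n) : {set 'I_t} := enum_val (widen_ord HS i).
Lemma col_inj : injective col.
Proof. move=> i j /enum_val_inj/(congr1 val) /= h; exact: val_inj. Qed.
Lemma col_card i : #|col i| = k.
Proof. by have := enum_valP (widen_ord HS i); rewrite inE => /eqP. Qed.
Definition QQ (j : 'I_t) : {set 'I_n} := [set i | j \in col i].
Definition SS (a : {ffun 'I_t -> bool}) : {set 'I_t} := [set j | a j].
Definition dec0 a := (SS a == set0) || [exists i, col i == SS a].
Definition det0 a := odflt i0 [pick i | col i == SS a].
Lemma SS_ans I : SS (answers QQ I) = \bigcup_(i in I) col i.
Proof.
apply/setP => j; rewrite !inE ffunE; apply/set0Pn/bigcupP.
  by case=> i; rewrite !inE => /andP[a b]; exists i.
by case=> i a b; exists i; rewrite !inE a b.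
Qed.
Lemma detects : detects_le1 QQ dec0 det0.
Proof.
move=> I; rewrite /dec0 /det0 SS_ans.
case: (leqP #|I| 1) => hI.
  have : (#|I| == 0) || (#|I| == 1) by lia.
  case/orP => /eqP.
    move/cards0_eq => ->; rewrite big_set0 eqxx; split=> //; by rewrite cards0.
  move/eqP/cards1P => [i ->]; rewrite big_set1.
  split; first by apply/orP; right; apply/existsP; exists i.
  move=> _; case: pickP => [j /eqP/col_inj -> //|/(_ i)]; by rewrite eqxx.
split; last by move=> h; rewrite h in hI.
apply/negbTE/norP; split.
  have [i iI] : exists i, i \in I by apply/set0Pn; rewrite -card_gt0; lia.
  apply/set0Pn; have : 0 < #|col i| by rewrite col_card.
  rewrite card_gt0 => /set0Pn [j jc]; exists j; apply/bigcupP; by exists i.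
apply/existsPn => i0'; apply/negP => /eqP E.
have [i [iI ne]] : exists i, i \in I /\ i != i0'.
  have := hI; rewrite (cardD1 i0') => h.
  have : 0 < #|[predD1 I & i0']| by move: h; case: (i0' \in I) => /= h; [rewrite add1n ltnS in h|rewrite add0n in h; apply: ltnW].
  case/card_gt0P => i. rewrite !inE => /andP[a b]. by exists i.
apply/negP: ne; apply/negPn/eqP; apply: col_inj.
apply/eqP; rewrite eqEcard !col_card leqnn andbT E.
exact: (bigcup_sup i iI).
Qed.
End C.

Lemma pow4 k : 4 * k <= 4 ^ k.
Proof.
elim: k => // k IH. rewrite expnS.
case: k IH => [|k] IH; first by [].
have : 0 < 4 ^ k.+1 by rewrite expn_gt0.
lia.
Qed.

Local Open Scope R_scope.

Lemma INR_expn m k : INR (m ^ k) = pow (INR m) k.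
Proof. elim: k => [|k IH]; first by []. by rewrite expnS mult_INR IH. Qed.

Lemma INR_ltn a b : (a < b)%N -> (INR a < INR b).
Proof. by move/ltP; apply: lt_INR. Qed.



Lemma real_bound (n k : nat) : (2 <= n)%N -> (0 < k)%N ->
  (16 ^ k < 4 * k * n ^ 2)%N ->
  (INR ((k.+1).*2) <= log2R (INR n) + / IZR 2 * log2R (log2R (INR n)) + 3).
Proof.
move=> hn hk h.
have h4 : (4 ^ k < n ^ 2)%N.
  have := pow4 k. have e : (16 ^ k = 4 ^ k * 4 ^ k)%N by rewrite -expnMn.
  rewrite e in h. move=> p. have hk4 : (0 < 4 * k)%N by lia. nia.
set l := ln (IZR 2).
have lpos : (0 < l) by rewrite /l -ln_1; apply: ln_increasing; lra.
have nR : (2 <= INR n) by have := le_INR 2 n (elimT leP hn); rewrite /=; lra.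
have kR : (1 <= INR k) by have := le_INR 1 k (elimT leP hk); rewrite /=; lra.
set x := log2R (INR n).
have lnn : ln (INR n) = (x * l) by rewrite /x /log2R -/l; field; lra.
have xge : (1 <= x).
  have : (l <= ln (INR n)).
    case: (Req_dec (INR n) 2) => [->|ne]; first by rewrite /l; apply: Rle_refl.
    by apply: Rlt_le; apply: ln_increasing; lra.
  rewrite lnn; nra.
have A : (INR k < x).
  have := INR_ltn h4. rewrite !INR_expn => hh.
  have p4 : 0 < INR 4 by rewrite /=; lra.
  have := ln_increasing _ _ (pow_lt _ k p4) hh.
  rewrite !ln_pow /=; try lra.
  have e4 : ln (1+1+1+1) = (2 * l).
    have -> : 1+1+1+1 = 2*2 by lra.
    rewrite ln_mult; try lra. rewrite /l; lra.
  rewrite e4 lnn. nra.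
have B : (4 * INR k < 2 + ln (INR k) / l + 2 * x).
  have := INR_ltn h. rewrite !mult_INR !INR_expn => hh.
  have p16 : 0 < INR 16 by rewrite /=; lra.
  have := ln_increasing _ _ (pow_lt _ k p16) hh.
  rewrite ln_pow /=; last lra.
  rewrite !ln_mult /=; try nra.
  have e16 : ln (1+1+1+1+1+1+1+1+1+1+1+1+1+1+1+1) = (4 * l).
    have -> : 1+1+1+1+1+1+1+1+1+1+1+1+1+1+1+1 = 2*(2*(2*2)) by lra.
    rewrite !ln_mult; try lra. rewrite /l; lra.
  have e4 : ln (1+1+1+1) = (2 * l).
    have -> : 1+1+1+1 = 2*2 by lra.
    rewrite ln_mult; try lra. rewrite /l; lra.
  rewrite e16 e4 lnn => hh2.
  set y := (ln (INR k) / l).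
  have ey : ln (INR k) = (y * l) by rewrite /y; field; lra.
  rewrite ey in hh2. nra.
have C : (ln (INR k) / l <= ln x / l).
  apply: Rmult_le_compat_r; first by apply: Rlt_le; apply: Rinv_0_lt_compat.
  apply: Rlt_le; apply: ln_increasing; lra.
have -> : INR (k.+1).*2 = (2 * INR k + 2).
  by rewrite -muln2 mult_INR S_INR /=; ring.
rewrite /log2R -/l -/x. lra.
Qed.

Lemma real_bound1 (n : nat) : (2 <= n)%N ->
  (INR (1.*2) <= log2R (INR n) + / IZR 2 * log2R (log2R (INR n)) + 3).
Proof.
move=> hn.
set l := ln (IZR 2).
have lpos : (0 < l) by rewrite /l -ln_1; apply: ln_increasing; lra.
have nR : (2 <= INR n) by have := le_INR 2 n (elimT leP hn); rewrite /=; lra.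
set x := log2R (INR n).
have lnn : ln (INR n) = (x * l) by rewrite /x /log2R -/l; field; lra.
have xge : (1 <= x).
  have : (l <= ln (INR n)).
    case: (Req_dec (INR n) 2) => [->|ne]; first by rewrite /l; apply: Rle_refl.
    by apply: Rlt_le; apply: ln_increasing; lra.
  rewrite lnn; nra.
have C : (0 <= ln x / l).
  apply: Rmult_le_pos; last by apply: Rlt_le; apply: Rinv_0_lt_compat.
  case: (Req_dec x 1) => [->|ne]; first by rewrite ln_1; lra.
  rewrite -ln_1; apply: Rlt_le; apply: ln_increasing; lra.
rewrite /= /log2R -/l -/x. lra.
Qed.

Local Close Scope R_scope.

Theorem lemma9 :
  exists C : R, forall n : nat, (2 <= n)%N ->
    exists (t : nat) (Q : 'I_t -> {set 'I_n})
           (dec : {ffun 'I_t -> bool} -> bool)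
           (det : {ffun 'I_t -> bool} -> 'I_n),
      detects_le1 Q dec det /\
      Rle (INR t) (Rplus (Rplus (log2R (INR n)) (Rmult (Rinv (IZR 2)) (log2R (log2R (INR n))))) C).
Proof.
exists (IZR 3) => n hn.
have i0 : 'I_n by exists 0; lia.
pose P := fun m => (0 < m) && (4 * m * n ^ 2 <= 16 ^ m).
have exP : exists m, P m.
  exists (4 * n); apply/andP; split; first lia.
  have e : 16 ^ (4 * n) = 2 ^ (4 * n) * 2 ^ (4 * n) * 2 ^ (4 * n) * 2 ^ (4 * n).
    by rewrite -!expnMn.
  rewrite e. have := ltn_expl (4 * n) (isT : 1 < 2). move=> hh.
  set X := 2 ^ (4 * n) in hh *.
  apply: (@leq_trans ((4 * n) * (4 * n) * (4 * n) * (4 * n))).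
    have hn1 : 1 <= n by lia. nia.
  have hX : 4 * n <= X by lia.
  by repeat apply: leq_mul.
case: (ex_minnP exP) => m /andP[m0 Pm] mmin.
have Hn : n <= 'C(m.*2, m).
  have := bin_bound m0. move=> hb.
  have : n ^ 2 <= 'C(m.*2, m) ^ 2.
    have : 4 * m * n ^ 2 <= 4 * m * 'C(m.*2, m) ^ 2 by lia.
    by rewrite leq_pmul2l; lia.
  nia.
exists m.*2, (QQ Hn), (dec0 Hn), (det0 i0 Hn); split; first exact: detects.
case: m m0 Pm mmin Hn => [//|[|k]] _ Pm mmin Hn.
  exact: real_bound1.
apply: real_bound => //.
rewrite ltnNge; apply/negP => hk.
have := mmin k.+1; rewrite /P hk /= => /(_ isT); lia.
Qed.
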